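(* Let $n_*>2$ be an integer, $\phi(b)=\upsilon\log b\,[\log\log b]^{1+\varepsilon}$ ($b\ge n_*+1$) with $\upsilon,\varepsilon>0$ such that $\phi(n_*+1)>1$, and $\mathsf{G}\in\mathbb{G}(n_*,\phi)$. Then for every $\theta>0$ there exists $a>0$ (possibly depending on $\theta,n_*,\upsilon,\varepsilon$) such that for every $x\in\mathsf{V}$ there exists $N_x\in\mathbb{N}$ with $$G_\theta(N,x):=\sum_{y\in\mathsf{S}(N,x)}[n(y)]^{1+\theta}\le\exp(aN)\quad\text{for all } N\ge N_x,$$ where $\mathsf{S}(N,x)=\{y\in\mathsf{V}:\rho(x,y)=N\}$.
   Context: $\mathsf{G}=(\mathsf{V},\mathsf{E})$ is a countable, connected, locally finite undirected graph; $n(x)$ is the degree, $\rho$ the path distance. For integer $n_*>2$, $\mathsf{V}_*=\{x:n(x)\le n_*\}$, $\mathsf{V}_*^c=\mathsf{V}\setminus\mathsf{V}_*$. For strictly increasing $\phi:(n_*,+\infty)\to(0,+\infty)$, $\mathbb{G}(n_*,\phi)$ is the family of graphs with $\rho(x,y)\ge\phi[\max\{n(x),n(y)\}]$ for all $x,y\in\mathsf{V}_*^c$. *)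

(* Defs.v *)
From HB Require Import structures.
From mathcomp Require Import all_boot all_order all_algebra.
From mathcomp Require Import all_classical all_reals all_analysis.

Set Implicit Arguments. Unset Strict Implicit. Unset Printing Implicit Defensive.
Import Order.TTheory GRing.Theory Num.Theory.
Local Open Scope ring_scope.

(* Local finiteness is built in:
   the neighbourhood of each vertex is a finite duplicate-free list. *)
Record lfgraph (V : countType) := LFGraph {
  nbrs : V -> seq V;
  nbrs_uniq : forall x, uniq (nbrs x);
  nbrs_irrefl : forall x, x \notin nbrs x;
  nbrs_sym : forall x y, (y \in nbrs x) = (x \in nbrs y);
  connected : forall x y : V,
    exists p : seq V, path (fun u v => v \in nbrs u) x p && (last x p == y)
}.

Section Graph.
Variables (V : countType) (G : lfgraph V).

Definition adj (u v : V) : bool := v \in nbrs G u.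
Local Open Scope nat_scope.

Definition deg (x : V) : nat := size (nbrs G x).

Fixpoint walk_len (x y : V) (n : nat) : bool :=
  match n with
  | 0 => x == y
  | n'.+1 => has (fun z => walk_len z y n') (nbrs G x)
  end.

Lemma walk_len_path (x : V) (p : seq V) :
  path adj x p -> walk_len x (last x p) (size p).
Proof.
elim: p x => [|z p IH] x /=; first by [].
move=> /andP[xz pz]; apply/hasP; exists z; first exact: xz.
exact: IH.
Qed.

Lemma walk_exists (x y : V) : exists n, walk_len x y n.
Proof.
have [p /andP[pp /eqP <-]] := connected G x y.
by exists (size p); apply: walk_len_path.
Qed.

Definition dist (x y : V) : nat := ex_minn (walk_exists x y).

Definition sphere (N : nat) (x : V) : set V := [set y | dist x y = N].

End Graph.

Definition in_GG (R : realType) (V : countType) (G : lfgraph V)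
  (nstar : nat) (phi : R -> R) : Prop :=
  forall x y : V, x <> y -> (nstar < deg G x)%N -> (nstar < deg G y)%N ->
    phi (maxn (deg G x) (deg G y))%:R <= (dist G x y)%:R.

Definition phi5 (R : realType) (ups eps : R) (b : R) : R :=
  ups * ln b * (ln (ln b)) `^ (1 + eps).

(* Main.v *)
Require Import Defs.
From HB Require Import structures.
From mathcomp Require Import all_boot all_order all_algebra.
From mathcomp Require Import all_classical all_reals all_analysis.
From mathcomp Require Import ring lra.
Import Order.TTheory GRing.Theory Num.Theory.
Set Implicit Arguments. Unset Strict Implicit. Unset Printing Implicit Defensive.
Lemma walk_cat (V : countType) (G : lfgraph V) (x y z : V) (m n : nat) :
  walk_len G x y m -> walk_len G y z n -> walk_len G x z (m + n).
Proof.
elim: m x => [|m IH] x /=; first by move/eqP->.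
move=> /hasP[w wx wy] yz; apply/hasP; exists w => //; exact: IH.
Qed.

Lemma walk_lenS (V : countType) (G : lfgraph V) (x y : V) (n : nat) :
  walk_len G x y n.+1 -> exists z, walk_len G x z n /\ y \in nbrs G z.
Proof.
elim: n x => [|n IH] x /=.
  by move=> /hasP[w wx /eqP <-]; exists x.
move=> /hasP[w wx /IH [z [wz yz]]]; exists z; split => //.
by apply/hasP; exists w.
Qed.

Lemma walk1 (V : countType) (G : lfgraph V) (x y : V) :
  y \in nbrs G x -> walk_len G x y 1.
Proof. by move=> h /=; apply/hasP; exists y. Qed.

Lemma dist_walk (V : countType) (G : lfgraph V) (x y : V) :
  walk_len G x y (dist G x y).
Proof. by rewrite /dist; case: ex_minnP. Qed.

Lemma dist_min (V : countType) (G : lfgraph V) (x y : V) (n : nat) :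
  walk_len G x y n -> (dist G x y <= n)%N.
Proof. by rewrite /dist; case: ex_minnP => m _ Hm /Hm. Qed.

Lemma dist_tri (V : countType) (G : lfgraph V) (x y z : V) :
  (dist G x z <= dist G x y + dist G y z)%N.
Proof. apply: dist_min; apply: walk_cat; apply: dist_walk. Qed.

Lemma walk_nth (V : countType) (G : lfgraph V) (u : V) (t : seq V) (i : nat) :
  path (adj G) u t -> (i < size t)%N -> walk_len G u (nth u t i) i.+1.
Proof.
elim: t u i => [|w t IH] u i //= /andP[uw pt].
case: i => [|i] /=; first by move=> _; apply: walk1.
rewrite ltnS => it; apply/hasP; exists w => //.
by rewrite (set_nth_default w) //; apply: IH.
Qed.

Fixpoint geo {V : countType} (G : lfgraph V) (x : V) (N : nat) : seq (seq V) :=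
  if N is N'.+1 then
    flatten [seq [seq rcons p z | z <- nbrs G (last x p) & dist G x z == N]
            | p <- geo G x N']
  else [:: [::]].

Definition geoinv {V : countType} (G : lfgraph V) (x : V) (N : nat) (p : seq V) :=
  [&& path (adj G) x p, size p == N, uniq (x :: p),
      all (fun v => dist G x v <= N)%N (x :: p) & dist G x (last x p) == N].

Lemma geo_inv (V : countType) (G : lfgraph V) (x : V) (N : nat) (p : seq V) :
  p \in geo G x N -> geoinv G x N p.
Proof.
elim: N p => [|N IH] p /=.
  rewrite inE => /eqP -> /=; rewrite /geoinv /= /dist.
  by case: ex_minnP => m _ /(_ 0%N (eqxx x)); rewrite leqn0 => ->.
move=> /flatten_mapP [q /IH /and5P[pq sq uq aq lq]] /mapP [z].
rewrite mem_filter => /andP[/eqP dz zq] ->.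
apply/and5P; split.
- by rewrite rcons_path pq.
- by rewrite size_rcons (eqP sq).
- rewrite -rcons_cons rcons_uniq uq andbT.
  apply/negP => /(allP aq); by rewrite dz ltnn.
- rewrite -rcons_cons all_rcons dz leqnn andTb.
  by apply/allP => v /(allP aq) /leqW.
- by rewrite last_rcons dz.
Qed.

Lemma geo_cover (V : countType) (G : lfgraph V) (x : V) (N : nat) (y : V) :
  dist G x y = N -> exists2 p, p \in geo G x N & last x p = y.
Proof.
elim: N y => [|N IH] y.
  move=> d0; have := @dist_walk _ G x y; rewrite d0 /= => /eqP ->.
  by exists [::]; rewrite ?inE.
move=> dy; have := @dist_walk _ G x y; rewrite dy => /walk_lenS [z [xz yz]].
have dz : dist G x z = N.
  apply/eqP; rewrite eqn_leq dist_min //=; rewrite leqNgt; apply/negP => lt.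
  have : walk_len G x y (dist G x z + 1) by exact: walk_cat (@dist_walk _ G x z) (walk1 yz).
  by move/dist_min; rewrite dy addn1 ltnS leqNgt lt.
have [p pg pl] := IH z dz.
exists (rcons p y); last by rewrite last_rcons.
apply/flatten_mapP; exists p => //; apply/mapP; exists y => //.
by rewrite mem_filter dy eqxx pl.
Qed.
Local Open Scope ring_scope.

Lemma sum_const_seq (R : realType) (T : Type) (s : seq T) (c : R) :
  \sum_(z <- s) c = c * (size s)%:R.
Proof.
elim: s => [|a s IH]; first by rewrite big_nil mulr0.
by rewrite big_cons IH /= -addn1 natrD mulrDr mulr1 addrC.
Qed.

Definition Wt (R : realType) (V : countType) (G : lfgraph V) (x : V) (p : seq V) : R :=
  \prod_(v <- belast x p) ((maxn 1 (deg G v))%:R)^-1.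

Lemma geo_weight (R : realType) (V : countType) (G : lfgraph V) (x : V) (N : nat) :
  \sum_(p <- geo G x N) Wt R G x p <= 1.
Proof.
elim: N => [|N IH] /=.
  by rewrite big_cons big_nil addr0 /Wt /= big_nil.
rewrite big_flatten /= big_map; apply: le_trans IH; apply: ler_sum => p _.
rewrite big_map.
have -> : \sum_(j <- [seq z <- nbrs G (last x p) | dist G x z == N.+1]) Wt R G x (rcons p j)
   = \sum_(j <- [seq z <- nbrs G (last x p) | dist G x z == N.+1])
       (Wt R G x p * ((maxn 1 (deg G (last x p)))%:R)^-1).
  apply: eq_bigr => z _; rewrite /Wt belast_rcons lastI big_rcons /=.
  done.
rewrite sum_const_seq -mulrA ler_piMr //.
  by apply: prodr_ge0 => v _; rewrite invr_ge0 ler0n.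
rewrite ler_pdivrMl ?ltr0n ?leq_maxl // mulr1 ler_nat.
apply: leq_trans (leq_maxr _ _); rewrite /deg; by rewrite size_filter count_size.
Qed.

Lemma sum_sub (R : realType) (T : eqType) (U : Type) (s : seq T) (t : seq U)
  (g : U -> T) (f : T -> R) :
  uniq s -> {subset s <= map g t} -> (forall y, 0 <= f y) ->
  \sum_(y <- s) f y <= \sum_(p <- t) f (g p).
Proof.
elim: t s => [|p t IH] s us ss f0.
  case: s us ss => [|a s] _; first by rewrite !big_nil.
  by move/(_ a); rewrite inE eqxx => /(_ isT).
rewrite (bigID (fun y => y == g p)) big_cons /= lerD //.
  case: (boolP (g p \in s)) => gs.
    by rewrite -big_filter filter_pred1_uniq // big_cons big_nil addr0.
  rewrite big1_seq // => y /andP[/eqP -> ys]; by rewrite ys in gs.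
rewrite -big_filter; apply: IH => //; first exact: filter_uniq.
  move=> y; rewrite mem_filter => /andP[ny /ss]; rewrite /= inE.
  by rewrite (negbTE ny).
Qed.

Lemma sphere_le (R : realType) (V : countType) (G : lfgraph V) (x : V) (N : nat)
  (f : V -> R) : (forall y, 0 <= f y) ->
  \sum_(y \in sphere G N x) f y <= \sum_(p <- geo G x N) f (last x p).
Proof.
move=> f0; apply: sum_sub => //.
move=> y ys.
have yS : sphere G N x y.
  case: (pselect (finite_set (sphere G N x `&` f @^-1` [set~ 0]))) => fin.
    by move: ys; rewrite in_finite_support // inE => -[].
  by move: ys; rewrite no_finite_support.
have [p pg <-] := geo_cover yS.
exact: map_f.
Qed.

Definition Fp (R : realType) (V : countType) (G : lfgraph V) (H : pred V) (t : seq V) : R :=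
  \prod_(v <- t | H v) (deg G v)%:R.

Definition Dl (R : realType) (V : countType) (G : lfgraph V) (H : pred V) (t : seq V) : R :=
  last 1 [seq (deg G v)%:R | v <- t & H v].

Lemma expR_ge1 (R : realType) (y : R) : 0 <= y -> 1 <= expR y.
Proof. by move=> y0; apply: le_trans (expR_ge1Dx y); rewrite lerDl. Qed.

Lemma last_indep (T : eqType) (a b : T) (s : seq T) : s != [::] -> last a s = last b s.
Proof. by case: s. Qed.

Lemma Fbound (R : realType) (V : countType) (G : lfgraph V) (H : pred V) (c0 : R) :
  0 < c0 ->
  (forall u w, u != w -> H u -> H w -> (deg G u)%:R <= expR ((dist G u w)%:R / c0)) ->
  forall u t, path (adj G) u t -> uniq (u :: t) ->
  Fp R G H (u :: t) <= expR (((size (u :: t) - find H (u :: t))%N)%:R / c0) * Dl R G H (u :: t).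
Proof.
move=> c0p hgap u t; elim: t u => [|w t IH] u.
  move=> _ _; rewrite /Fp /Dl big_cons big_nil /=.
  case: (H u) => /=; rewrite mulr1; [apply: ler_peMl; first exact: ler0n|];
    by apply: expR_ge1; rewrite divr_ge0 ?ler0n // ltW.
move=> pt ut; have /andP[uw pt'] := pt; have /andP[unt ut'] := ut.
have IH' := IH w pt' ut'.
have Fge0 : 0 <= Fp R G H (w :: t) by apply: prodr_ge0 => v _; rewrite ler0n.
case Hu: (H u); last first.
  have -> : Fp R G H [:: u, w & t] = Fp R G H (w :: t) by rewrite /Fp big_cons Hu.
  have -> : Dl R G H [:: u, w & t] = Dl R G H (w :: t) by rewrite /Dl /= Hu.
  have -> : (size [:: u, w & t] - find H [:: u, w & t])%N = (size (w :: t) - find H (w :: t))%N.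
    by rewrite [in LHS]/= Hu subSS.
  exact: IH'.
rewrite /Fp big_cons Hu -/(Fp R G H (w :: t)).
case hs: (has H (w :: t)).
  set s := w :: t in hs unt IH' pt Fge0 *.
  have rlt : (find H s < size s)%N by rewrite -has_find.
  set r := find H s in rlt IH'.
  have Hh : H (nth u s r) := nth_find u hs.
  have hin : nth u s r \in s := mem_nth u rlt.
  have uh : u != nth u s r by apply/eqP => E; move: hin; rewrite -E (negbTE unt).
  have wk := walk_nth pt rlt.
  have du := hgap _ _ uh Hu Hh.
  have du' : (deg G u)%:R <= expR (r.+1%:R / c0 : R).
    apply: le_trans du _; rewrite ler_expR ler_pM2r ?invr_gt0 // ler_nat.
    exact: dist_min.
  have -> : Dl R G H (u :: s) = Dl R G H s.
    rewrite /Dl.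
    have -> : [seq v <- u :: s | H v] = u :: [seq v <- s | H v] by rewrite [LHS]/= Hu.
    rewrite map_cons last_cons; apply: last_indep.
    by rewrite -size_eq0 size_map size_eq0 -has_filter.
  have -> : ((size (u :: s) - find H (u :: s))%N)%:R = (r.+1 + (size s - r))%:R :> R.
    by rewrite /= Hu subn0 addSn subnKC // ltnW.
  rewrite natrD mulrDl expRD -mulrA; apply: ler_pM => //.
move: hs => /negbT hs.
have -> : Fp R G H (w :: t) = 1.
  rewrite /Fp big1_seq // => v /andP[Hv vin]; move/hasPn: hs => /(_ v vin).
  by rewrite Hv.
have -> : Dl R G H (u :: w :: t) = (deg G u)%:R.
  rewrite /Dl /= Hu /=; move: hs; rewrite has_filter negbK /= => /eqP ->.
  done.
rewrite mulr1; apply: ler_peMl; first exact: ler0n.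
by apply: expR_ge1; rewrite divr_ge0 ?ler0n // ltW.
Qed.

Lemma expR1_lt4 (R : realType) : expR (1 : R) < 4%:R.
Proof.
have h : 1 + (- 2^-1) < expR (- 2^-1 : R).
  by apply: expR_gt1Dx; rewrite oppr_eq0 invr_eq0 pnatr_eq0.
have e1 : expR (2^-1 : R) * expR (- 2^-1) = 1 by rewrite expRxMexpNx_1.
have hpos : (0 : R) < expR (2^-1) by apply: expR_gt0.
have -> : (1 : R) = 2^-1 + 2^-1 by field.
rewrite expRD.
move: h e1 hpos; set a := expR (2^-1 : R); set b := expR (- 2^-1 : R).
have -> : (2^-1 : R) = 1/2 by rewrite div1r.
move=> h e1 hpos.
have ha : a < 2 by nra.
nra.
Qed.

Definition cst (R : realType) (nstar : nat) (ups eps : R) : R :=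
  ups * (ln (ln (nstar.+1)%:R)) `^ (1 + eps).

Lemma ln_nstar_gt1 (R : realType) (nstar : nat) : (2 < nstar)%N -> 1 < ln ((nstar.+1)%:R : R).
Proof.
move=> h; rewrite -ltr_expR lnK ?posrE ?ltr0n //.
apply: lt_le_trans (expR1_lt4 R) _; rewrite ler_nat; exact: h.
Qed.

Lemma cst_gt0 (R : realType) (nstar : nat) (ups eps : R) :
  (2 < nstar)%N -> 0 < ups -> 0 < cst nstar ups eps.
Proof.
move=> h u0; rewrite /cst mulr_gt0 // powR_gt0 // ln_gt0 //; exact: ln_nstar_gt1.
Qed.

Lemma gap (R : realType) (V : countType) (G : lfgraph V) (nstar : nat) (ups eps : R) :
  (2 < nstar)%N -> 0 < ups -> 0 < eps -> in_GG G nstar (phi5 ups eps) ->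
  forall u w, u != w -> (nstar < deg G u)%N -> (nstar < deg G w)%N ->
  (maxn (deg G u) (deg G w))%:R <= expR ((dist G u w)%:R / cst nstar ups eps).
Proof.
move=> h u0 e0 hG u w uw hu hw.
have hp := hG u w (elimN eqP uw) hu hw.
set m := maxn (deg G u) (deg G w) in hp *.
have hm : (nstar < m)%N by apply: leq_trans hu (leq_maxl _ _).
have l1 := ln_nstar_gt1 R h.
have Mge : ((nstar.+1)%:R : R) <= m%:R by rewrite ler_nat.
have Mpos : (0 : R) < m%:R by rewrite ltr0n; apply: leq_ltn_trans hm.
have lM : ln ((nstar.+1)%:R : R) <= ln (m%:R : R).
  by rewrite ler_ln; [done | rewrite posrE ltr0n | rewrite posrE].
have lMpos : 0 < ln (m%:R : R) by apply: lt_le_trans lM; apply: lt_trans l1.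
have llM : ln (ln ((nstar.+1)%:R : R)) <= ln (ln (m%:R : R)).
  rewrite ler_ln; [done | by rewrite posrE (lt_trans _ l1) | by rewrite posrE].
have l0pos : 0 < ln (ln ((nstar.+1)%:R : R)) by apply: ln_gt0.
have pw : ln (ln ((nstar.+1)%:R : R)) `^ (1 + eps) <= ln (ln (m%:R : R)) `^ (1 + eps).
  apply: ge0_ler_powR => //; first by rewrite addr_ge0 // ltW.
    by rewrite nnegrE ltW.
  by rewrite nnegrE ltW // (lt_le_trans l0pos llM).
have c0p := cst_gt0 eps h u0.
have key : cst nstar ups eps * ln (m%:R : R) <= (dist G u w)%:R.
  apply: le_trans hp; rewrite /phi5 /cst -mulrA [_ `^ _ * _]mulrC mulrA.
  apply: ler_pM => //; [ by rewrite mulr_ge0 // ltW | exact: powR_ge0 ].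
rewrite -[X in X <= _](lnK (x := m%:R)) ?posrE // ler_expR.
by rewrite ler_pdivlMr // mulrC.
Qed.

Lemma prod_const_seq (R : realType) (T : Type) (s : seq T) (c : R) :
  \prod_(z <- s) c = c ^+ size s.
Proof.
elim: s => [|a s IH]; first by rewrite big_nil expr0.
by rewrite big_cons IH /= exprS.
Qed.

Lemma prod_ge1 (R : realType) (T : Type) (s : seq T) (F : T -> R) :
  (forall z, 1 <= F z) -> 1 <= \prod_(z <- s) F z.
Proof.
move=> h; elim: s => [|a s IH]; first by rewrite big_nil.
rewrite big_cons -[X in X <= _]mulr1; apply: ler_pM => //.
Qed.

Lemma Mv_ge1 (R : realType) (V : countType) (G : lfgraph V) (v : V) :
  1 <= ((maxn 1 (deg G v))%:R : R).
Proof. by rewrite ler1n leq_maxl. Qed.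

Theorem lemma5p4 (R : realType) (nstar : nat) (ups eps : R) :
  (2 < nstar)%N -> 0 < ups -> 0 < eps ->
  1 < phi5 ups eps (nstar.+1)%:R ->
  forall theta : R, 0 < theta ->
  exists a : R, 0 < a /\
    forall (V : countType) (G : lfgraph V),
      in_GG G nstar (phi5 ups eps) ->
      forall x : V, exists Nx : nat, forall N : nat, (Nx <= N)%N ->
        \sum_(y \in sphere G N x) ((deg G y)%:R `^ (1 + theta)) <= expR (a * N%:R).
Proof.
move=> h2 u0 e0 _ theta th0.
set c0 := cst nstar ups eps.
have c0p : 0 < c0 := cst_gt0 eps h2 u0.
have n1 : (1 <= nstar)%N by apply: leq_trans h2.
have lnn : 0 <= ln (nstar%:R : R) by apply: ln_ge0; rewrite ler1n.
set a := (1 + theta) * (ln (nstar%:R : R) + 2 / c0 + 1).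
exists a; split.
  have : 0 < 2 / c0 by rewrite divr_gt0.
  rewrite /a => h; apply: mulr_gt0; lra.
move=> V G hG x.
pose H := fun v => (nstar < deg G v)%N.
have hgap : forall u w, u != w -> H u -> H w ->
    (deg G u)%:R <= expR ((dist G u w)%:R / c0).
  move=> u w uw hu hw; apply: le_trans (gap h2 u0 e0 hG uw hu hw).
  by rewrite ler_nat leq_maxl.
have [t0 [D0 [D01 anchor]]] : exists t0 D0 : nat, (1 <= D0)%N /\
    forall v N, H v -> (dist G x v <= N)%N ->
      (deg G v)%:R <= D0%:R * expR ((N + t0)%:R / c0).
  have eg1 : forall k : nat, 1 <= expR (k%:R / c0) :> R.
    by move=> k; apply: expR_ge1; rewrite divr_ge0 // ltW.
  case: (pselect (exists h0, H h0)) => [[h0 Hh0]|nh].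
    exists (dist G h0 x), (deg G h0); split; first by apply: leq_trans Hh0.
    move=> v N Hv dv.
    case: (eqVneq v h0) => [->|vh].
      apply: ler_peMr; [exact: ler0n | exact: eg1].
    have hw : h0 != v by rewrite eq_sym.
    have hh := gap h2 u0 e0 hG hw Hh0 Hv.
    have e1 : (deg G v)%:R <= expR ((N + dist G h0 x)%:R / c0).
      apply: (le_trans _ (le_trans hh _)); first by rewrite ler_nat leq_maxr.
      rewrite ler_expR ler_pM2r ?invr_gt0 // ler_nat.
      apply: leq_trans (dist_tri G h0 x v) _.
      by rewrite addnC leq_add2r.
    apply: le_trans e1 _; apply: ler_peMl; first exact: expR_ge0.
    by rewrite ler1n; apply: leq_trans Hh0.
  exists 0%N, 1%N; split => // v N Hv; exfalso; apply: nh; by exists v.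
have lD0 : 0 <= ln (D0%:R : R) by apply: ln_ge0; rewrite ler1n.
set X := ln (nstar%:R : R) + (1 + t0)%:R / c0 + ln (D0%:R : R).
have X0 : 0 <= X by rewrite /X !addr_ge0 // divr_ge0 // ltW.
exists (Num.Def.archi_bound X) => N hN.
have XN : X <= N%:R.
  by apply: ltW; apply: lt_le_trans (archi_boundP X0) _; rewrite ler_nat.
set K := expR (a * N%:R).
apply: le_trans (@sphere_le R V G x N (fun y => (deg G y)%:R `^ (1 + theta)) _) _.
  by move=> y; apply: powR_ge0.
apply: (@le_trans _ _ (\sum_(p <- geo G x N) Wt R G x p * K)); last first.
  by rewrite -mulr_suml; apply: ler_piMl; [exact: expR_ge0 | exact: geo_weight].
rewrite [X in X <= _]big_seq [X in _ <= X]big_seq; apply: ler_sum => p pg.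
have /and5P [pp sp up ap lp] := geo_inv pg.
set M := fun v => ((maxn 1 (deg G v))%:R : R).
set B := \prod_(v <- belast x p) M v.
have B1 : 1 <= B by apply: prod_ge1 => z; apply: Mv_ge1.
have Bpos : 0 < B by apply: lt_le_trans ltr01 B1.
have WB : Wt R G x p = B^-1 by rewrite /Wt prodfV.
rewrite WB mulrC ler_pdivlMr //.
set P := \prod_(v <- x :: p) M v.
have PB : P = B * M (last x p) by rewrite /P (lastI x p) big_rcons.
have th1 : 1 <= 1 + theta by rewrite lerDl ltW.
have step1 : (deg G (last x p))%:R `^ (1 + theta) * B <= P `^ (1 + theta).
  rewrite PB powRM ?(le_trans ler01 B1) ?ler0n // mulrC.
  apply: ler_pM; [exact: ltW | exact: powR_ge0 | exact: le1r_powR |].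
  apply: ge0_ler_powR; rewrite ?nnegrE ?ler0n ?ler_nat ?leq_maxr //.
  exact: le_trans ler01 th1.
set L := (N.+1)%:R / c0 + (ln (D0%:R : R) + (N + t0)%:R / c0) + (N.+1)%:R * ln (nstar%:R : R).
have step2 : P <= expR L.
  have sz : size (x :: p) = N.+1 by rewrite /= (eqP sp).
  rewrite /P (bigID H) /=.
  have F1 : \prod_(v <- x :: p | H v) M v = Fp R G H (x :: p).
    rewrite /Fp; apply: eq_bigr => v Hv; rewrite /M; congr (_%:R).
    by apply/maxn_idPr; apply: ltnW; apply: leq_ltn_trans n1 Hv.
  have F2 : \prod_(v <- x :: p | ~~ H v) M v <= nstar%:R ^+ N.+1.
    rewrite big_mkcond /= -sz -prod_const_seq; apply: ler_prod => v _.
    case: ifP => hv /=.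
      by rewrite ler0n /= ler_nat geq_max n1 leqNgt.
    by rewrite ler01 ler1n.
  have F3 := Fbound c0p hgap pp up.
  have F4 : expR (((size (x :: p) - find H (x :: p))%N)%:R / c0) <= expR ((N.+1)%:R / c0).
    by rewrite ler_expR ler_pM2r ?invr_gt0 // ler_nat -sz leq_subr.
  have F5 : 0 <= Dl R G H (x :: p) /\ Dl R G H (x :: p) <= D0%:R * expR ((N + t0)%:R / c0).
    have := mem_last (1 : R) [seq ((deg G v)%:R : R) | v <- x :: p & H v].
    rewrite inE => /orP [/eqP E | /mapP [v]].
      rewrite /Dl E ler01; split => //; rewrite -[X in X <= _]mulr1; apply: ler_pM => //.
        by rewrite ler1n.
      by apply: expR_ge1; rewrite divr_ge0 // ltW.
    rewrite mem_filter => /andP [Hv vin] E; rewrite /Dl E ler0n; split => //.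
    by apply: anchor => //; apply: (allP ap).
  have eD : expR (ln (D0%:R : R)) = D0%:R by rewrite lnK // posrE ltr0n.
  have eN : expR ((N.+1)%:R * ln (nstar%:R : R)) = nstar%:R ^+ N.+1.
    by rewrite expRM_natl lnK // posrE ltr0n.
  rewrite /L !expRD eD eN F1.
  have Fge0 : 0 <= Fp R G H (x :: p) by apply: prodr_ge0 => v _; rewrite ler0n.
  apply: ler_pM => //.
    by apply: prodr_ge0 => v _; rewrite /M ler0n.
  apply: le_trans F3 _; apply: ler_pM => //; by case: F5.
have step3 : L * (1 + theta) <= a * N%:R.
  have eqL : L = N%:R * (ln (nstar%:R : R) + 2 / c0) + X.
    rewrite /L /X.
    have -> : (N.+1)%:R = N%:R + 1 :> R by rewrite -addn1 natrD.
    rewrite !natrD; field; exact: lt0r_neq0.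
  rewrite eqL mulrC /a -mulrA; apply: ler_wpM2l; first exact: le_trans ler01 th1.
  set y := ln _ + _; lra.
apply: le_trans step1 _.
apply: (@le_trans _ _ (expR L `^ (1 + theta))).
  apply: ge0_ler_powR; [exact: le_trans ler01 th1 | | by rewrite nnegrE expR_ge0 | exact: step2].
  have P1 : 1 <= P by apply: prod_ge1 => z; apply: Mv_ge1.
  by rewrite nnegrE; apply: le_trans ler01 P1.
by rewrite -expRM ler_expR.
Qed.
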